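(* Let $X$ be an $n$-dimensional real normed space and let $Y \subseteq X$ be a $k$-dimensional subspace, where $1 \leq k \leq n-1$. Suppose that there exists a minimal Chalmers–Metcalf operator $T$ for $Y$ supported on $l$ pairs. Then $\dim \mathcal{P}_{\min}(X, Y) \leq k(n-k) - l + 1$.
   Context: A projection onto $Y$ is a linear $P:X\to Y$ with $P|_Y=\mathrm{id}_Y$; $\lambda(Y,X)$ is the infimum of the operator norms of projections and $\mathcal{P}_{\min}(X,Y)$ the set of projections of norm $\lambda(Y,X)$; $\dim\mathcal{P}_{\min}(X,Y)$ is the affine dimension of this convex subset of $\mathcal{L}(X,X)$. For $x\in X$, $f\in X^*$, $x\otimes f$ is the operator $z\mapsto f(z)x$. A Chalmers–Metcalf operator for $Y$ is an operator $T=\sum_{i=1}^{l}\alpha_i x_i\otimes f_i:X\to X$ with $(x_i,f_i)\in\mathrm{ext}\,B_X\times\mathrm{ext}\,B_{X^*}$ (extreme points of the unit balls of $X$ and $X^*$), $\alpha_i>0$, $\sum_i\alpha_i=1$, $T(Y)\subseteq Y$, and $f_i(P_0(x_i))=\|P_0\|=\lambda(Y,X)$ for all $i$ and some fixed minimal projection $P_0$; it is supported on the $l$ pairs $(x_i,f_i)$. It is minimal if no proper subset of the pairs $(x_i,f_i)$ yields a Chalmers–Metcalf operator for $Y$ with any choice of weights. *)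

(* Defs.v *)
From HB Require Import structures.
From mathcomp Require Import all_boot all_order all_algebra.
From mathcomp Require Import boolp classical_sets reals.
Set Implicit Arguments. Unset Strict Implicit. Unset Printing Implicit Defensive.
Import Order.TTheory GRing.Theory Num.Theory.
Local Open Scope ring_scope.
Local Open Scope classical_set_scope.

(* Model: X = row vectors 'rV[R]_n equipped with a norm N.  Operators
   X -> X are matrices acting on the right: A(x) = x *m A.
   Functionals f in X^* are column vectors: f(x) = (x *m f) 0 0.
   The operator x (x) f : z |-> f(z) x is the matrix f *m x.
   A subspace Y of X is given as the row space of a matrix Y : 'M_n. *)

Section Defs.
Variables (R : realType) (n : nat).

Definition fapp (f : 'cV[R]_n) (x : 'rV[R]_n) : R := (x *m f) 0 0.

Definition is_norm (N : 'rV[R]_n -> R) : Prop :=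
  [/\ forall x, N x = 0 -> x = 0,
      forall (a : R) x, N (a *: x) = `|a| * N x &
      forall x y, N (x + y) <= N x + N y].

Definition unit_ball (N : 'rV[R]_n -> R) : set 'rV[R]_n := [set x | N x <= 1].

Definition dual_norm (N : 'rV[R]_n -> R) (f : 'cV[R]_n) : R :=
  sup [set `|fapp f x| | x in unit_ball N].

Definition dual_unit_ball (N : 'rV[R]_n -> R) : set 'cV[R]_n :=
  [set f | dual_norm N f <= 1].

Definition extreme_point (V : lmodType R) (B : set V) (x : V) : Prop :=
  B x /\ forall y z (t : R), B y -> B z -> 0 < t < 1 ->
    x = t *: y + (1 - t) *: z -> y = z.

Definition op_norm (N : 'rV[R]_n -> R) (A : 'M[R]_n) : R :=
  sup [set N (x *m A) | x in unit_ball N].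

Definition is_projection (Y : 'M[R]_n) (P : 'M[R]_n) : Prop :=
  (P <= Y)%MS /\ forall y : 'rV[R]_n, (y <= Y)%MS -> y *m P = y.

Definition proj_const (N : 'rV[R]_n -> R) (Y : 'M[R]_n) : R :=
  inf [set op_norm N P | P in is_projection Y].

Definition Pmin (N : 'rV[R]_n -> R) (Y : 'M[R]_n) : set 'M[R]_n :=
  [set P | is_projection Y P /\ op_norm N P = proj_const N Y].

Definition affine_in (S : set 'M[R]_n) (d : nat) : bool :=
  `[< exists (P0 : 'M[R]_n) (V : 'M[R]_(n * n)),
        (\rank V <= d)%N /\ forall P, S P -> (mxvec (P - P0) <= V)%MS >].

Lemma affine_in_ex (S : set 'M[R]_n) : exists d, affine_in S d.
Proof.
exists (n * n)%N; apply/asboolP; exists 0, 1%:M; split.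
  by rewrite mxrank1.
by move=> P _; rewrite submx1.
Qed.

Definition affdim (S : set 'M[R]_n) : int :=
  if pselect (exists P, S P) then (ex_minn (affine_in_ex S))%:Z else (-1)%R.

Definition CM_on (N : 'rV[R]_n -> R) (Y : 'M[R]_n) (l : nat)
    (x : 'I_l -> 'rV[R]_n) (f : 'I_l -> 'cV[R]_n) (a : 'I_l -> R)
    (J : {set 'I_l}) : Prop :=
  [/\ forall i, i \in J -> extreme_point (unit_ball N) (x i)
                        /\ extreme_point (dual_unit_ball N) (f i),
      forall i, i \in J -> 0 < a i,
      \sum_(i in J) a i = 1,
      (Y *m (\sum_(i in J) a i *: (f i *m x i)) <= Y)%MS &
      exists P0, Pmin N Y P0 /\
        forall i, i \in J -> fapp (f i) (x i *m P0) = proj_const N Y].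

Definition CM_op (l : nat) (x : 'I_l -> 'rV[R]_n) (f : 'I_l -> 'cV[R]_n)
    (a : 'I_l -> R) : 'M[R]_n := \sum_(i < l) a i *: (f i *m x i).

Definition is_CM_operator (N : 'rV[R]_n -> R) (Y : 'M[R]_n) (l : nat)
    (x : 'I_l -> 'rV[R]_n) (f : 'I_l -> 'cV[R]_n) (a : 'I_l -> R)
    (T : 'M[R]_n) : Prop :=
  CM_on N Y x f a [set: 'I_l] /\ T = CM_op x f a.

Definition CM_minimal (N : 'rV[R]_n -> R) (Y : 'M[R]_n) (l : nat)
    (x : 'I_l -> 'rV[R]_n) (f : 'I_l -> 'cV[R]_n) : Prop :=
  forall (J : {set 'I_l}) (b : 'I_l -> R),
    J \proper [set: 'I_l] -> ~ CM_on N Y x f b J.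

End Defs.

(* Main.v *)
Require Import Defs.
From HB Require Import structures.
From mathcomp Require Import all_boot all_order all_algebra.
From mathcomp Require Import boolp classical_sets reals.
From mathcomp Require Import topology normedtype derive.
From mathcomp Require Import ring lra zify.
Import Order.TTheory GRing.Theory Num.Theory.
Import numFieldNormedType.Exports.
Local Open Scope ring_scope.
Local Open Scope classical_set_scope.

Section NormEq.
Variables (R : realType) (n : nat) (N : 'rV[R]_n -> R).
Hypothesis hN : is_norm N.

Lemma N0 : N 0 = 0.
Proof. case: hN => _ hZ _; by rewrite -(scale0r (0 : 'rV[R]_n)) hZ normr0 mul0r. Qed.

Lemma NN x : N (- x) = N x.
Proof. case: hN => _ hZ _; by rewrite -scaleN1r hZ normrN normr1 mul1r. Qed.

Lemma Nge0 x : 0 <= N x.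
Proof.
case: hN => _ _ hT; have := hT x (- x); rewrite subrr N0 NN => h.
lra.
Qed.

Lemma entry_le (x : 'rV[R]_n) j : `|x 0 j| <= `|x|.
Proof.
rewrite [leRHS]/Num.norm /= mx_normrE.
by apply/bigmax_geP; right; exists (0, j).
Qed.

Lemma Nup x : N x <= `|x| * \sum_j N (delta_mx 0 j).
Proof.
case: hN => _ hZ hT.
rewrite {1}(row_sum_delta x) mulr_sumr.
elim/big_ind2: _ => //.
- by rewrite N0.
- move=> a b c d h1 h2; apply: le_trans (hT _ _) _; exact: lerD.
- move=> j _; rewrite hZ; apply: ler_wpM2r; [exact: Nge0| exact: entry_le].
Qed.



Lemma Ndist x y : `|N x - N y| <= N (x - y).
Proof.
have [_ _ hT] := hN.
have h1 := hT (x - y) y; rewrite subrK in h1.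
have h2 := hT (y - x) x; rewrite subrK in h2.
rewrite -opprB NN in h2.
rewrite ler_norml; apply/andP; split; lra.
Qed.

Lemma Ncont : continuous N.
Proof.
set K := \sum_j N (delta_mx 0 j).
have K0 : 0 <= K by apply: sumr_ge0 => j _; exact: Nge0.
move=> x; apply/(@cvgrPdist_lt _ _ _ _ (nbhs_filter x)) => e e0.
have eK : 0 < e / (K + 1) by rewrite divr_gt0 // ltr_wpDl.
have := (@cvgrPdist_lt _ _ _ (nbhs x) (nbhs_filter x) (fun t : 'rV[R]_n => t) x).1 (@cvg_id _ (nbhs x)) _ eK.
apply: filterS => t ht.
apply: le_lt_trans (Ndist x t) _.
apply: le_lt_trans (Nup (x - t)) _.
have K1 : 0 < K + 1 by rewrite ltr_wpDl.
have H : `|x - t| * (K + 1) < e by rewrite -ltr_pdivlMr.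
apply: le_lt_trans H; rewrite ler_wpM2l // lerDl //.
Qed.



Lemma Nlow : (0 < n)%N -> exists2 c, 0 < c & forall x, c * `|x| <= N x.
Proof.
move=> n0.
have [hZ0 hZ hT] := hN.
pose S := [set x : 'rV[R]_n | `|x| = 1].
pose v : 'rV[R]_n := delta_mx 0 (Ordinal n0).
have v0 : v != 0.
  apply/eqP => /matrixP /(_ 0 (Ordinal n0)); rewrite !mxE !eqxx /=.
  by move/eqP; rewrite oner_eq0.
have nv0 : 0 < `|v| by rewrite normr_gt0.
have S0 : S !=set0.
  exists (`|v|^-1 *: v); rewrite /S /= normrZ ger0_norm ?invr_ge0 ?ltW //.
  by rewrite mulVf // gt_eqF.
have cS : compact S.
  apply: bounded_closed_compact.
    exists 1; split; first exact: num_real.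
    by move=> y y1 x; rewrite /S /= => ->; apply: ltW.
  have -> : S = (fun x : 'rV[R]_n => `|x|) @^-1` [set r | r = 1] by [].
  apply: preimage_closed; last exact: closed_eq.
  by move=> x _; apply: norm_continuous.
have cN : {within S, continuous N} by apply: continuous_subspaceT => x; exact: Ncont.
have [c0 /set_mem Sc0 hmin] := EVT_min_rV S0 cS cN.
have c0nz : c0 != 0 by apply/eqP => c00; move: Sc0; rewrite /S /= c00 normr0 => /eqP; rewrite eq_sym oner_eq0.
have Nc0 : 0 < N c0.
  rewrite lt_def Nge0 andbT; apply/eqP => /hZ0 /eqP; exact/negP.
exists (N c0) => // x.
have [->|x0] := eqVneq x 0; first by rewrite normr0 mulr0 Nge0.
have nx0 : 0 < `|x| by rewrite normr_gt0.
have Sx : S (`|x|^-1 *: x).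
  by rewrite /S /= normrZ ger0_norm ?invr_ge0 ?ltW // mulVf // gt_eqF.
have := hmin _ (mem_set Sx); rewrite hZ ger0_norm ?invr_ge0 ?normr_ge0 //.
by rewrite ler_pdivlMl // mulrC.
Qed.


Lemma Nmul x (A : 'M[R]_n) : N (x *m A) <= `|x| * \sum_j N (row j A).
Proof.
have [_ hZ hT] := hN.
rewrite mulmx_sum_row mulr_sumr.
elim/big_ind2: _ => //.
- by rewrite N0.
- move=> a b c d h1 h2; apply: le_trans (hT _ _) _; exact: lerD.
- move=> j _; rewrite hZ; apply: ler_wpM2r; [exact: Nge0| exact: entry_le].
Qed.

Lemma fapp_bound (f : 'cV[R]_n) x : `|fapp f x| <= `|x| * \sum_j `|f j 0|.
Proof.
rewrite /fapp mxE mulr_sumr.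
apply: le_trans (ler_norm_sum _ _ _) _.
apply: ler_sum => j _; rewrite normrM; apply: ler_wpM2r => //; exact: entry_le.
Qed.

Lemma ball_bound : (0 < n)%N -> exists C, forall x, N x <= 1 -> `|x| <= C.
Proof.
move=> n0; have [c c0 hc] := Nlow n0.
exists c^-1 => x hx; rewrite -(ler_pM2l c0) mulfV ?gt_eqF //.
exact: le_trans (hc x) hx.
Qed.

Hypothesis n0 : (0 < n)%N.

Lemma op_norm_ub P x : N x <= 1 -> N (x *m P) <= op_norm N P.
Proof.
move=> hx; apply: ub_le_sup; last by exists x.
have [C hC] := ball_bound n0.
exists (C * \sum_j N (row j P)) => _ [y hy <-].
apply: le_trans (Nmul y P) _; apply: ler_wpM2r; last exact: hC.
by apply: sumr_ge0 => j _; exact: Nge0.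
Qed.

Lemma dual_has_ub f : has_ubound [set `|fapp f x| | x in unit_ball N].
Proof.
have [C hC] := ball_bound n0.
exists (C * \sum_j `|f j 0|) => _ [y hy <-].
apply: le_trans (fapp_bound f y) _; apply: ler_wpM2r; last exact: hC.
by apply: sumr_ge0.
Qed.

Lemma dual_ge0 f : 0 <= dual_norm N f.
Proof.
apply: le_trans (ub_le_sup (dual_has_ub f) _); first exact: lexx.
exists 0; first by rewrite /unit_ball /= N0.
by rewrite /fapp mul0mx mxE normr0.
Qed.

Lemma op_ge0 P : 0 <= op_norm N P.
Proof. by apply: le_trans (@op_norm_ub P 0 _); rewrite ?mul0mx N0. Qed.

Lemma dual_ub f y : fapp f y <= dual_norm N f * N y.
Proof.
have [hZ0 hZ hT] := hN.
have [->|y0] := eqVneq y 0; first by rewrite /fapp mul0mx mxE N0 mulr0.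
have Ny : 0 < N y.
  rewrite lt_def Nge0 andbT; apply/eqP => /hZ0 /eqP; exact/negP.
have h1 : N ((N y)^-1 *: y) <= 1.
  by rewrite hZ ger0_norm ?invr_ge0 ?Nge0 // mulVf // gt_eqF.
have hin : [set `|fapp f x| | x in unit_ball N] (`|fapp f ((N y)^-1 *: y)|).
  by exists ((N y)^-1 *: y).
have := ub_le_sup (dual_has_ub f) hin.
rewrite /fapp -scalemxAl mxE normrM ger0_norm ?invr_ge0 ?Nge0 //.
rewrite ler_pdivrMl // => h; apply: le_trans (ler_norm _) _.
by rewrite mulrC.
Qed.

Lemma key_ineq f x P : N x <= 1 -> dual_norm N f <= 1 ->
  fapp f (x *m P) <= op_norm N P.
Proof.
move=> hx hf.
apply: le_trans (dual_ub f _) _.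
have h1 := op_norm_ub P x hx.
have h2 := dual_ge0 f.
have h3 := op_ge0 P.
have h4 := Nge0 (x *m P).
nra.
Qed.

End NormEq.

Local Close Scope classical_set_scope.

Section LinAlg.
Variables (R : realType) (n : nat).
Implicit Types (D E T G Z C : 'M[R]_n).

Lemma fapp_tr (f : 'cV[R]_n) (x : 'rV[R]_n) D :
  fapp f (x *m D) = \tr (D *m (f *m x)).
Proof. by rewrite /fapp mulmxA mxtrace_mulC mulmxA trace_mx11. Qed.

Lemma tr_zero E D T : D *m E = D -> E *m D = 0 -> E *m T *m E = E *m T ->
  \tr (D *m T) = 0.
Proof.
move=> hDE hED hET.
rewrite -hDE -mulmxA -hET mulmxA mxtrace_mulC !mulmxA hED !mul0mx.
exact: mxtrace0.
Qed.

Lemma tr_delta G (i j : 'I_n) : \tr (delta_mx i j *m G) = G j i.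
Proof.
rewrite mxtrace_mulC -(mul_delta_mx (0 : 'I_1)) mulmxA -colE mxtrace_mulC -rowE.
by rewrite trace_mx11 !mxE.
Qed.

Lemma tr_all0 G : (forall Z, \tr (Z *m G) = 0) -> G = 0.
Proof. by move=> h; apply/matrixP => j i; rewrite mxE -tr_delta h. Qed.

Lemma proj_fix (Y Q : 'M[R]_n) m (M : 'M[R]_(m, n)) :
  is_projection Y Q -> (M <= Y)%MS -> M *m Q = M.
Proof.
move=> [_ hQ] hM; apply/row_matrixP => i; rewrite row_mul; apply: hQ.
exact: submx_trans (row_sub i M) hM.
Qed.

Lemma stable_of (Y E C : 'M[R]_n) : is_projection Y E ->
  E *m C *m (1%:M - E) = 0 -> (Y *m C <= Y)%MS.
Proof.
move=> hE h.
have hEY : (E <= Y)%MS by case: hE.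
have hYE : Y *m E = Y by apply: proj_fix hE _.
have hEC : E *m C = E *m C *m E.
  by apply/eqP; rewrite -subr_eq0 -{1}(mulmx1 (E *m C)) -mulmxBr h.
rewrite -{1}hYE -mulmxA hEC !mulmxA.
exact: submx_trans (submxMl _ _) hEY.
Qed.

Lemma sum_setT (V : nmodType) l (F : 'I_l -> V) :
  \sum_(i in [set: 'I_l]) F i = \sum_i F i.
Proof. by apply: eq_bigl => i; rewrite finset.in_setT. Qed.

Lemma mulPhi l (G : 'I_l -> 'M[R]_n) (u : 'rV[R]_(n * n)) i :
  (u *m \matrix_(r, i) \tr (vec_mx (delta_mx 0 r) *m G i)) 0 i
  = \tr (vec_mx u *m G i).
Proof.
rewrite mxE {2}(row_sum_delta u) linear_sum /= mulmx_suml raddf_sum.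
apply: eq_bigr => r _; rewrite mxE linearZ /= -scalemxAl mxtraceZ //.
Qed.

Lemma tr_sum l (F : 'I_l -> 'M[R]_n) : \tr (\sum_i F i) = \sum_i \tr (F i).
Proof. exact: raddf_sum. Qed.

End LinAlg.

Lemma key_ineq' (R : realType) (n : nat) (N : 'rV[R]_n -> R) (hN : is_norm N) (n0 : (0 < n)%N)
  (f : 'cV[R]_n) (x : 'rV[R]_n) (P : 'M[R]_n) : N x <= 1 -> dual_norm N f <= 1 ->
  fapp f (x *m P) <= op_norm N P.
Proof. exact: key_ineq. Qed.

Theorem mainTheorem11 (R : realType) (n k l : nat)
  (N : 'rV[R]_n -> R) (Y : 'M[R]_n) :
  is_norm N ->
  (1 <= k)%N -> (k <= n - 1)%N ->
  \rank Y = k ->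
  (exists (x : 'I_l -> 'rV[R]_n) (f : 'I_l -> 'cV[R]_n) (a : 'I_l -> R)
          (T : 'M[R]_n),
      is_CM_operator N Y x f a T /\ CM_minimal N Y x f) ->
  affdim (Pmin N Y) <= (k * (n - k))%:Z - l%:Z + 1.
Proof.
move=> hN k1 kn rk [x [f [a [T [[CM _] hmin]]]]].
have n0 : (0 < n)%N by lia.
case: CM => hext hpos hsum hstab [P0 [hP0 hfix]].
rewrite sum_setT in hsum; rewrite sum_setT in hstab.
pose G i := f i *m x i.
pose T' := \sum_i a i *: G i.
pose lam := proj_const N Y.
have hE : is_projection Y P0 by case: hP0.
have hEY : (P0 <= Y)%MS by case: hE.
have fact1 : forall P, Pmin N Y P -> forall i, \tr ((P - P0) *m G i) = 0.
  move=> P [hP hPn] .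
  have hPE : P *m P0 = P by apply: proj_fix hE _; case: hP.
  have hEP : P0 *m P = P0 by apply: proj_fix hP hEY.
  have hEE : P0 *m P0 = P0 by apply: proj_fix hE hEY.
  have htr : \tr ((P - P0) *m T') = 0.
    apply: (@tr_zero R n P0).
    - by rewrite mulmxBl hPE hEE.
    - by rewrite mulmxBr hEP hEE subrr.
    - apply: proj_fix hE _.
      have [M ->] := submxP hEY.
      by rewrite -mulmxA; exact: submx_trans (submxMl _ _) hstab.
  have hle : forall i, fapp (f i) (x i *m P) <= lam.
    move=> i; rewrite /lam -hPn; apply: key_ineq' => //.
    - by have [[[]]] := hext i (finset.in_setT i).
    - by have [_ [[]]] := hext i (finset.in_setT i).
  have hdiff : forall i, \tr ((P - P0) *m G i) = fapp (f i) (x i *m P) - lam.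
    move=> i; rewrite /lam -(hfix i (finset.in_setT i)) !fapp_tr.
    by rewrite mulmxBl raddfB.
  have hsum0 : \sum_i a i * (lam - fapp (f i) (x i *m P)) = 0.
    have -> : \sum_i a i * (lam - fapp (f i) (x i *m P)) = - \tr ((P - P0) *m T').
      rewrite /T' mulmx_sumr tr_sum -sumrN; apply: eq_bigr => i _.
      by rewrite -scalemxAr mxtraceZ hdiff -mulrN opprB.
    by rewrite htr oppr0.
  have hge : forall i, true -> 0 <= a i * (lam - fapp (f i) (x i *m P)).
    move=> j _; rewrite mulr_ge0 ?subr_ge0 ?hle //; exact: ltW (hpos j (finset.in_setT j)).
  have h0 := psumr_eq0P hge hsum0; move=> i.
  have := h0 i isT; rewrite hdiff; move/eqP; rewrite mulf_eq0 gt_eqF ?hpos ?finset.in_setT //=.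
  by rewrite subr_eq0 eq_sym => /eqP ->; rewrite subrr.
pose A := 1%:M - P0.
move: (col_base A) (row_base A) (mulmx_base A) => A1 A2 eA.
move: (col_base P0) (row_base P0) (mulmx_base P0) => B1 B2 eB.
pose g := mulmxr B2 \o mulmx A1.
pose V0 := lin_mx g.
pose Phi := \matrix_(r < n * n, i < l) \tr (vec_mx (delta_mx 0 r) *m G i).
pose U := V0 *m Phi.
pose W := (V0 :&: kermx Phi)%MS.
have hrk : (\rank U + \rank W)%N = \rank V0 := mxrank_mul_ker V0 Phi.
have hV0 : (\rank V0 <= \rank A * \rank P0)%N := rank_leq_row V0.
have hb : (\rank P0 <= k)%N by rewrite -rk mxrankS.
have hYE : Y *m P0 = Y by apply: proj_fix hE _.
have ha : (\rank A + k <= n)%N.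
  have : (Y <= kermx A)%MS.
    by apply/sub_kermxP; rewrite /A mulmxBr mulmx1 hYE subrr.
  move/mxrankS; rewrite mxrank_ker rk => h.
  have := rank_leq_row A; lia.
have hAZE : forall Z, A *m Z *m P0 = g (A2 *m Z *m B1).
  move=> Z; change (A *m Z *m P0 = A1 *m (A2 *m Z *m B1) *m B2).
  by rewrite !mulmxA eA -(mulmxA _ B1) eB.
have haff : affine_in (Pmin N Y) (\rank W).
  apply/asboolP; exists P0, W; split => // P hP.
  have [hPp _] := hP.
  have hPE : P *m P0 = P by apply: proj_fix hE _; case: hPp.
  have hEP : P0 *m P = P0 by apply: proj_fix hPp hEY.
  have hEE : P0 *m P0 = P0 by apply: proj_fix hE hEY.
  have hD : P - P0 = A *m (P - P0) *m P0.
    rewrite /A mulmxBl mul1mx mulmxBr !mulmxBl hPE hEE hEP.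
    by rewrite subrr subr0.
  rewrite sub_capmx; apply/andP; split.
    by rewrite hD hAZE -mul_vec_lin submxMl.
  apply/sub_kermxP; apply/rowP => i.
  by rewrite mulPhi mxvecK fact1 // mxE.
have hU : (l <= \rank U + 1)%N.
  rewrite leqNgt; apply/negP => hlt.
  pose K1 := kermx U^T.
  pose one : 'M[R]_(l, 1) := const_mx 1.
  pose K2 := kermx one.
  have r1 : \rank K1 = (l - \rank U)%N by rewrite mxrank_ker mxrank_tr.
  have r2 : \rank K2 = (l - \rank one)%N by rewrite mxrank_ker.
  have r3 := rank_leq_col one.
  have r4 := mxrank_sum_cap K1 K2.
  have r5 := rank_leq_col (K1 + K2)%MS.
  have : (K1 :&: K2)%MS != 0.
    rewrite -mxrank_eq0; lia.
  case/rowV0Pn => c; rewrite sub_capmx => /andP [/sub_kermxP hc1 /sub_kermxP hc2] c0.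
  have hcsum : \sum_i c 0 i = 0.
    have := congr1 (fun M : 'M[R]_1 => M 0 0) hc2; rewrite !mxE => h; rewrite -[RHS]h.
    by apply: eq_bigr => i _; rewrite mxE mulr1.
  have hUc : U *m c^T = 0 by rewrite -[U]trmxK -trmx_mul hc1 trmx0.
  pose Cm := \sum_i c 0 i *: G i.
  have htrC : forall C', \tr (g C' *m Cm) = 0.
    move=> C'.
    have : (mxvec C' *m U *m c^T) 0 0 = 0 by rewrite -mulmxA hUc mulmx0 mxE.
    rewrite mxE => h; rewrite -[RHS]h.
    rewrite /Cm mulmx_sumr tr_sum; apply: eq_bigr => i _.
    rewrite /U mulmxA mul_vec_lin mulPhi mxvecK mxE -scalemxAr mxtraceZ mulrC.
    by [].
  have htrZ : forall Z, \tr (Z *m (P0 *m Cm *m A)) = 0.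
    move=> Z; rewrite !mulmxA mxtrace_mulC !mulmxA hAZE; exact: htrC.
  have hstC : (Y *m Cm <= Y)%MS := @stable_of R n Y P0 Cm hE (@tr_all0 R n _ htrZ).
  have [j hj] : exists j, c 0 j < 0.
    case: (pselect (exists j, c 0 j < 0)) => // hno; exfalso.
    have hge : forall i, true -> 0 <= c 0 i.
      by move=> i _; rewrite leNgt; apply/negP => h; apply: hno; exists i.
    have h0 := psumr_eq0P hge hcsum.
    by apply: (negP c0); apply/eqP/rowP => i; rewrite mxE; exact: h0.
  have := @arg_minP _ _ _ j [pred i | c 0 i < 0] (fun i => a i / - c 0 i) hj.
  case=> j0 hj0 hmin0.
  pose t := a j0 / - c 0 j0.
  have t0 : 0 <= t.
    by rewrite /t divr_ge0 // ?oppr_ge0 ?ltW // hpos // finset.in_setT.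
  pose b i := a i + t * c 0 i.
  have hb0 : forall i, 0 <= b i.
    move=> i; case: (ltP (c 0 i) 0) => hci.
    - have := hmin0 i hci; rewrite /= ler_pdivlMr ?oppr_gt0 // mulrN /b => h.
      rewrite /t; lra.
    - have := hpos i (finset.in_setT i).
      have : 0 <= t * c 0 i by rewrite mulr_ge0.
      rewrite /b; lra.
  have hbj0 : b j0 = 0.
    rewrite /b /t; field.
    by rewrite lt_eqF.
  pose J := [set i | b i != 0].
  apply: (hmin J b).
    have hT : forall i : 'I_l, i \in in_set [set: 'I_l]%classic.
      by move=> i; apply/asboolP.
    apply/properP; split.
      by apply/fintype.subsetP => i _; exact: hT.
    by exists j0; rewrite ?hT // inE hbj0 eqxx.
  have eJ : forall (V : nmodType) (F : 'I_l -> V), (forall i, b i = 0 -> F i = 0) ->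
      \sum_(i in J) F i = \sum_i F i.
    move=> V F hF; rewrite big_mkcond /=; apply: eq_bigr => i _; rewrite inE.
    by case: (eqVneq (b i) 0) => [h|h] /=; [rewrite hF|].
  split.
  - by move=> i _; exact: hext i (finset.in_setT i).
  - by move=> i; rewrite inE => hi; rewrite lt_def hi hb0.
  - rewrite eJ // big_split /= -mulr_sumr hsum hcsum mulr0 addr0 //.
  - rewrite eJ; last by move=> i ->; rewrite scale0r.
    rewrite (eq_bigr (fun i => a i *: G i + t *: (c 0 i *: G i))); last first.
      by move=> i _; rewrite scalerDl scalerA.
    rewrite big_split /= -scaler_sumr mulmxDr -scalemxAr.
    by apply: addmx_sub => //; apply: scalemx_sub.
  - by exists P0; split => // i _; exact: hfix i (finset.in_setT i).
have hle : (ex_minn (affine_in_ex (Pmin N Y)) <= \rank W)%N.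
  destruct (ex_minnP (affine_in_ex (Pmin N Y))) as [m _ hm]; exact: hm _ haff.
rewrite /affdim; destruct (pselect _) as [hex|hno]; last by exfalso; apply: hno; exists P0.
move: hle.
have : (\rank A * \rank P0 <= (n - k) * k)%N.
  apply: leq_mul; lia.
move=> h1 h2 /=.
move: (ex_minn _) h2 => m h2.
rewrite mulnC in h1.
move: h1; set p := (k * (n - k))%N => h1.
lia.
Qed.
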